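(* For every $i\in I^+$ and every $a=(a_j)_{j\in I}\in\mathbb{N}_0^{I}$, $$\Omega_i\, x^{a}=\Big(\prod_{l=-n}^{-i}q^{2a_l}\Big)\sum_{j=i}^{n}q^{\,j-i+(a_{1-j}+\cdots+a_{j-1})}\,x^{a+\varepsilon_{-j}+\varepsilon_j}$$ in $\mathcal X$, where $a_{1-j}+\cdots+a_{j-1}$ denotes the sum of $a_k$ over all $k\in I$ with $1-j\le k\le j-1$.
   Context: Let $\mathbf{k}$ be a field of characteristic $0$, $q\in\mathbf{k}$ invertible and not a root of unity, $n\ge 2$, $I=\{-n,\dots,-1,1,\dots,n\}$ (ordered as integers; $0\notin I$), $I^+=\{1,\dots,n\}$, $\lambda=q-q^{-1}$. The quantum symplectic space $\mathcal X$ is the $\mathbf{k}$-algebra generated by $x_i$ ($i\in I$) with defining relations $x_jx_i=qx_ix_j$ for $i<j$, $j\neq -i$, and $x_ix_{-i}=q^2x_{-i}x_i+q^2\lambda\Omega_{i+1}$ for $i\in I^+$, where $\Omega_i=\sum_{j=i}^{n}q^{j-i}x_{-j}x_j$ for $i\in I^+$ and $\Omega_{n+1}=0$. For $a=(a_i)_{i\in I}\in\mathbb{N}_0^{I}$ put $x^a=x_{-n}^{a_{-n}}x_{1-n}^{a_{1-n}}\cdots x_{-1}^{a_{-1}}x_1^{a_1}\cdots x_n^{a_n}$ (a normal monomial: factors in increasing order of index); the normal monomials form a $\mathbf{k}$-basis of $\mathcal X$. $\varepsilon_i$ ($i\in I$) denotes the standard unit vector in $\mathbb{Z}^{I}$.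 *)

(* Defs.v *)
From HB Require Import structures.
From mathcomp Require Import all_boot all_order all_algebra.
Set Implicit Arguments. Unset Strict Implicit. Unset Printing Implicit Defensive.
Import Order.TTheory GRing.Theory Num.Theory.
Local Open Scope ring_scope.

(* The index set I = {-n,...,-1,1,...,n} as a sequence of integers in
   increasing order. *)
Definition idxI (n : nat) : seq int :=
  [seq - (Posz (n - k)%N) | k <- iota 0 n] ++ [seq Posz k.+1 | k <- iota 0 n].

Definition Omega (k : fieldType) (A : algType k) (q : k) (x : int -> A)
    (n i : nat) : A :=
  \sum_(i <= j < n.+1) (q ^+ (j - i)) *: (x (- Posz j) * x (Posz j)).

Definition mono (k : fieldType) (A : algType k) (x : int -> A) (n : nat)
    (a : int -> nat) : A :=
  \prod_(l <- idxI n) x l ^+ a l.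

Definition addeps (a : int -> nat) (j : int) : int -> nat :=
  fun l => (a l + (l == j) + (l == - j))%N.

Definition qsymp_rel (k : fieldType) (A : algType k) (q : k) (x : int -> A)
    (n : nat) : Prop :=
  (forall i j : int, i \in idxI n -> j \in idxI n -> i < j -> j != - i ->
      x j * x i = q *: (x i * x j))
  /\ (forall i : nat, (1 <= i <= n)%N ->
      x (Posz i) * x (- Posz i) =
        (q ^+ 2) *: (x (- Posz i) * x (Posz i))
        + (q ^+ 2 * (q - q^-1)) *: Omega q x n i.+1).

(* Main.v *)
Require Import Defs.
From HB Require Import structures.
From mathcomp Require Import all_boot all_order all_algebra.
From mathcomp Require Import zify ring.
Import Order.TTheory GRing.Theory Num.Theory.
Local Open Scope ring_scope.


Definition rng (lo : int) (len : nat) : seq int := [seq lo + (Posz k) | k <- iota 0 len].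

Lemma rng_split (lo : int) (len m : nat) : (m <= len)%N ->
  rng lo len = rng lo m ++ rng (lo + Posz m) (len - m).
Proof.
move=> h; rewrite /rng -{1}(subnKC h) iotaD map_cat add0n; congr (_ ++ _).
rewrite -{1}(addn0 m) (iotaDl m 0) -map_comp; apply: eq_map => k /=; lia.
Qed.

Lemma rng1 (lo : int) : rng lo 1 = [:: lo].
Proof. by rewrite /rng /= addr0. Qed.

Lemma mem_rng (lo : int) (len : nat) (l : int) :
  (l \in rng lo len) = (lo <= l) && (l < lo + Posz len).
Proof.
apply/mapP/idP.
- by move=> [k hk ->]; move: hk; rewrite mem_iota; lia.
- move=> h; exists `|l - lo|%N; first by rewrite mem_iota; lia.
  lia.
Qed.

Lemma idxI_rng (n : nat) : idxI n = rng (- Posz n) n ++ rng 1 n.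
Proof.
rewrite /idxI /rng; congr (_ ++ _).
apply/eq_in_map => k; rewrite mem_iota => h; lia.
Qed.

Lemma mem_idxI (n : nat) (l : int) :
  (l \in idxI n) = [&& l != 0, - Posz n <= l & l <= Posz n].
Proof. rewrite idxI_rng mem_cat !mem_rng; apply/idP/idP; lia. Qed.

Set Implicit Arguments. Unset Strict Implicit. Unset Printing Implicit Defensive.

Definition Pr (k : fieldType) (A : algType k) (x : int -> A) (a : int -> nat) (s : seq int) : A :=
  \prod_(l <- s) x l ^+ a l.

Lemma commL (k : fieldType) (A : algType k) (x : int -> A) (a : int -> nat)
  (c : A) (al : k) (s : seq int) :
  (forall l, l \in s -> c * x l = al *: (x l * c)) ->
  forall y, c * (Pr x a s * y) = al ^+ (\sum_(l <- s) a l) *: (Pr x a s * (c * y)).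
Proof.
rewrite /Pr; elim: s => [|h t IH] H y.
  by rewrite !big_nil mul1r expr0 scale1r mul1r.
have Hp : forall e, c * x h ^+ e = al ^+ e *: (x h ^+ e * c).
  elim=> [|e IHe]; first by rewrite !expr0 mul1r mulr1 scale1r.
  rewrite exprS mulrA H ?mem_head // -scalerAl -(mulrA (x h) c) IHe -scalerAr scalerA.
  by rewrite !exprS !mulrA.
rewrite !big_cons -!mulrA mulrA Hp -scalerAl -mulrA IH; last first.
  by move=> l hl; apply: H; rewrite in_cons hl orbT.
by rewrite -scalerAr scalerA -exprD.
Qed.

Lemma commR (k : fieldType) (A : algType k) (x : int -> A) (a : int -> nat)
  (d : A) (al : k) (s : seq int) :
  (forall l, l \in s -> x l * d = al *: (d * x l)) ->
  forall y, Pr x a s * (d * y) = al ^+ (\sum_(l <- s) a l) *: (d * (Pr x a s * y)).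
Proof.
rewrite /Pr; elim: s => [|h t IH] H y.
  by rewrite !big_nil mul1r expr0 scale1r mul1r.
have Hp : forall e, x h ^+ e * d = al ^+ e *: (d * x h ^+ e).
  elim=> [|e IHe]; first by rewrite !expr0 mul1r mulr1 scale1r.
  rewrite exprSr -(mulrA (x h ^+ e)) H ?mem_head // -scalerAr (mulrA (x h ^+ e)) IHe -scalerAl scalerA.
  by rewrite -mulrA exprS.
rewrite !big_cons -!mulrA IH; last first.
  by move=> l hl; apply: H; rewrite in_cons hl orbT.
rewrite -scalerAr.
set P := (\prod_(l <- t) x l ^+ a l * y).
have -> : x h ^+ a h * (d * P) = al ^+ a h *: (d * (x h ^+ a h * P)).
  by rewrite mulrA Hp -scalerAl -mulrA.
by rewrite scalerA /P !mulrA addnC exprD.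
Qed.


Definition rel1 (k : fieldType) (A : algType k) (q : k) (x : int -> A) (n : nat) :=
  forall i j : int, i \in idxI n -> j \in idxI n -> i < j -> j != - i ->
      x j * x i = q *: (x i * x j).

Lemma Omega_S (k : fieldType) (A : algType k) (q : k) (x : int -> A) (n i : nat) :
  (i <= n)%N -> Omega q x n i = x (- Posz i) * x (Posz i) + q *: Omega q x n i.+1.
Proof.
move=> h; rewrite /Omega big_ltn ?ltnS // subnn expr0 scale1r; congr (_ + _).
rewrite scaler_sumr; apply: eq_big_nat => j /andP[hj _].
by rewrite scalerA -exprS; congr (_ ^+ _ *: _); lia.
Qed.

Lemma Omega_split (k : fieldType) (A : algType k) (q : k) (x : int -> A) (n i m : nat) :
  (i <= m <= n.+1)%N -> Omega q x n i =
   \sum_(i <= j < m) q ^+ (j - i) *: (x (- Posz j) * x (Posz j)) + q ^+ (m - i) *: Omega q x n m.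
Proof.
move=> /andP[h1 h2]; rewrite /Omega (@big_cat_nat _ _ _ m) //=; congr (_ + _).
rewrite scaler_sumr; apply: eq_big_nat => j /andP[hj _].
by rewrite scalerA -exprD; congr (_ ^+ _ *: _); lia.
Qed.

Lemma L2 (k : fieldType) (A : algType k) (q : k) (x : int -> A) (n i : nat) (l : int) :
  rel1 q x n -> (1 <= i)%N -> l \in idxI n -> (`|l| < i)%N ->
  Omega q x n i * x l = x l * Omega q x n i.
Proof.
move=> hr hi hl hli; rewrite /Omega mulr_suml mulr_sumr; apply: eq_big_nat => j /andP[hij hjn].
rewrite -scalerAl -scalerAr; congr (_ *: _).
have hj : Posz j \in idxI n by rewrite mem_idxI; lia.
have hmj : - Posz j \in idxI n by rewrite mem_idxI; lia.
have r1 : x (Posz j) * x l = q *: (x l * x (Posz j)) by apply: hr => //; lia.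
have r2 : x l * x (- Posz j) = q *: (x (- Posz j) * x l) by apply: hr => //; lia.
by rewrite -mulrA r1 -scalerAr mulrA (mulrA (x l)) r2 -scalerAl.
Qed.

Definition rel2 (k : fieldType) (A : algType k) (q : k) (x : int -> A) (n : nat) :=
  forall i : nat, (1 <= i <= n)%N ->
      x (Posz i) * x (- Posz i) =
        (q ^+ 2) *: (x (- Posz i) * x (Posz i))
        + (q ^+ 2 * (q - q^-1)) *: Omega q x n i.+1.

Lemma L1 (k : fieldType) (A : algType k) (q : k) (x : int -> A) (n i m : nat) :
  q != 0 -> rel1 q x n -> rel2 q x n -> (1 <= i <= m)%N -> (m <= n)%N ->
  Omega q x n i * x (- Posz m) = q ^+ 2 *: (x (- Posz m) * Omega q x n i).
Proof.
move=> hq hr hr2 /andP[hi him] hmn.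
have E : Omega q x n m * x (- Posz m) = q ^+ 2 *: (x (- Posz m) * Omega q x n m).
  rewrite (Omega_S _ _ hmn) mulrDl -mulrA hr2; last by lia.
  rewrite -scalerAl L2 //; rewrite ?mem_idxI; try lia.
  rewrite mulrDr mulrDr -!scalerAr -!addrA.
  rewrite (mulrDr (x (- Posz m))) scalerDr -scalerAr scalerA; congr (_ + _); rewrite -scalerDl; congr (_ *: _).
  by field.
rewrite (@Omega_split _ _ q x n i m); last by lia.
rewrite mulrDl mulrDr scalerDr -scalerAl E -scalerAr scalerA mulrC -scalerA; congr (_ + _).
rewrite mulr_suml mulr_sumr scaler_sumr; apply: eq_big_nat => j /andP[hij hjm].
rewrite -scalerAl -scalerAr scalerA mulrC -scalerA; congr (_ *: _).
have hj : Posz j \in idxI n by rewrite mem_idxI; lia.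
have hmj : - Posz j \in idxI n by rewrite mem_idxI; lia.
have hl : - Posz m \in idxI n by rewrite mem_idxI; lia.
have r1 : x (Posz j) * x (- Posz m) = q *: (x (- Posz m) * x (Posz j)) by apply: hr => //; lia.
have r2 : x (- Posz j) * x (- Posz m) = q *: (x (- Posz m) * x (- Posz j)) by apply: hr => //; lia.
rewrite -mulrA r1 -scalerAr mulrA r2 -scalerAl scalerA -expr2 mulrA //.
Qed.


Lemma Pr_cat (k : fieldType) (A : algType k) (x : int -> A) a s1 s2 :
  Pr x a (s1 ++ s2) = Pr x a s1 * Pr x a s2.
Proof. by rewrite /Pr big_cat. Qed.

Lemma Pr1 (k : fieldType) (A : algType k) (x : int -> A) a e :
  Pr x a [:: e] = x e ^+ a e.
Proof. by rewrite /Pr big_cons big_nil mulr1. Qed.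

Lemma Pr_addeps (k : fieldType) (A : algType k) (x : int -> A) a (j : int) s :
  (forall l, l \in s -> (l != j) && (l != - j)) -> Pr x (addeps a j) s = Pr x a s.
Proof.
move=> h; rewrite /Pr; apply: eq_big_seq => l /h /andP[h1 h2].
by rewrite /addeps (negbTE h1) (negbTE h2) !addn0.
Qed.

Lemma stepB (k : fieldType) (A : algType k) (q : k) (x : int -> A) (n : nat) a (j : nat)
  (L1 L2 M0 R1 R2 : seq int) :
  rel1 q x n -> (1 <= j <= n)%N ->
  (forall l, l \in L2 ++ M0 -> [&& l \in idxI n, - Posz j < l & l < Posz j]) ->
  (forall l, l \in R1 -> [&& l \in idxI n, - Posz j < l & l < Posz j]) ->
  (forall l, l \in L1 ++ L2 ++ M0 ++ R1 ++ R2 -> (l != Posz j) && (l != - Posz j)) ->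
  Pr x a (L1 ++ [:: - Posz j] ++ L2) * (Pr x a M0 *
     (x (- Posz j) * x (Posz j) * Pr x a (R1 ++ [:: Posz j] ++ R2)))
  = q ^+ (\sum_(l <- L2 ++ M0 ++ R1) a l) *:
     Pr x (addeps a (Posz j)) (L1 ++ [:: - Posz j] ++ L2 ++ M0 ++ R1 ++ [:: Posz j] ++ R2).
Proof.
move=> hr hj hLM hR hne.
have hjI : Posz j \in idxI n by rewrite mem_idxI; lia.
have hmjI : - Posz j \in idxI n by rewrite mem_idxI; lia.
have ne : forall s, (forall l, l \in s -> l \in L1 ++ L2 ++ M0 ++ R1 ++ R2) ->
   Pr x (addeps a (Posz j)) s = Pr x a s.
  by move=> s hs; apply: Pr_addeps => l /hs /hne.
rewrite !Pr_cat !Pr1 !ne; first last.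
- by move=> l hl; rewrite !mem_cat hl ?orbT.
- by move=> l hl; rewrite !mem_cat hl ?orbT.
- by move=> l hl; rewrite !mem_cat hl ?orbT.
- by move=> l hl; rewrite !mem_cat hl ?orbT.
- by move=> l hl; rewrite !mem_cat hl ?orbT.
have -> : addeps a (Posz j) (Posz j) = (a (Posz j)).+1.
  rewrite /addeps eqxx; have -> : (Posz j == - Posz j) = false by apply/negbTE; lia.
  by rewrite addn0 addn1.
have -> : addeps a (Posz j) (- Posz j) = (a (- Posz j)).+1.
  rewrite /addeps eqxx; have -> : (- Posz j == Posz j) = false by apply/negbTE; lia.
  by rewrite addn0 addn1.
have hcR1 : forall l, l \in R1 -> x (Posz j) * x l = q *: (x l * x (Posz j)).
  by move=> l /hR /and3P[h1 h2 h3]; apply: hr => //; lia.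
have hcM : forall l, l \in L2 ++ M0 -> x l * x (- Posz j) = q *: (x (- Posz j) * x l).
  by move=> l /hLM /and3P[h1 h2 h3]; apply: hr => //; lia.
rewrite -!mulrA (commL _ hcR1) (mulrA (x (Posz j))) -exprS -!scalerAr.
have hcM0 : forall l, l \in M0 -> x l * x (- Posz j) = q *: (x (- Posz j) * x l).
  by move=> l hl; apply: hcM; rewrite mem_cat hl orbT.
have hcL2 : forall l, l \in L2 -> x l * x (- Posz j) = q *: (x (- Posz j) * x l).
  by move=> l hl; apply: hcM; rewrite mem_cat hl.
rewrite (commR _ hcM0) -!scalerAr (commR _ hcL2) -!scalerAr !scalerA -!exprD.
rewrite (mulrA (x (- Posz j) ^+ a (- Posz j))) -exprSr.
by rewrite !big_cat /= addnC (addnC (\sum_(l <- R1) a l)) addnA.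
Qed.

Lemma bigAll (R : Type) (idx : R) (op : Monoid.law idx) (s : seq int) (P : pred int) (F : int -> R) :
  (forall l, l \in s -> P l) -> \big[op/idx]_(l <- s | P l) F l = \big[op/idx]_(l <- s) F l.
Proof.
move=> h; rewrite big_seq_cond [RHS]big_seq; apply: eq_bigl => l.
by case: (boolP (l \in s)) => //= hl; rewrite h.
Qed.

Lemma bigNone (R : Type) (idx : R) (op : Monoid.law idx) (s : seq int) (P : pred int) (F : int -> R) :
  (forall l, l \in s -> ~~ P l) -> \big[op/idx]_(l <- s | P l) F l = idx.
Proof.
move=> h; rewrite big_seq_cond big_pred0 // => l.
by case: (boolP (l \in s)) => //= hl; rewrite (negbTE (h _ hl)).
Qed.

Unset Implicit Arguments.

Theorem lemma2p4 (k : fieldType) (q : k) (n : nat) (A : algType k) (x : int -> A) :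
  [pchar k] =i pred0 ->
  q != 0 ->
  (forall m : nat, (0 < m)%N -> q ^+ m != 1) ->
  (2 <= n)%N ->
  qsymp_rel q x n ->
  forall (i : nat) (a : int -> nat), (1 <= i <= n)%N ->
    Omega q x n i * mono x n a =
      (\prod_(l <- idxI n | l <= - Posz i) q ^+ (2 * a l)) *:
        \sum_(i <= j < n.+1)
          q ^+ ((j - i)%N + (\sum_(l <- idxI n | ((1 - Posz j <= l) && (l <= Posz j - 1))%R) a l)%N)%N
            *: mono x n (addeps a (Posz j)).
Proof.
move=> _ hq _ hn [hr hr2] i a /andP[hi hin].
pose L := rng (- Posz n) (n - i).+1.
pose M0 := rng (- Posz n + Posz (n - i).+1) (n - (n - i).+1) ++ rng 1 i.-1.
pose Rr := rng (1 + Posz i.-1) (n - i.-1).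
have hdec : idxI n = L ++ M0 ++ Rr.
  rewrite idxI_rng (@rng_split (- Posz n) n (n - i).+1); last by lia.
  rewrite (@rng_split 1 n i.-1); last by lia.
  by rewrite /L /M0 /Rr -!catA.
have hbL : forall l, l \in L -> (- Posz n <= l) && (l <= - Posz i).
  by move=> l; rewrite mem_rng; lia.
have hbM : forall l, l \in M0 -> (l != 0) && (- Posz i < l < Posz i).
  by move=> l; rewrite mem_cat !mem_rng; lia.
clearbody M0.
have hbR : forall l, l \in Rr -> (Posz i <= l <= Posz n).
  by move=> l; rewrite mem_rng; lia.
have pref : \prod_(l <- idxI n | l <= - Posz i) q ^+ (2 * a l) = (q ^+ 2) ^+ (\sum_(l <- L) a l).
  rewrite hdec big_cat big_cat /= (bigAll *%R); last by move=> l hl; have := hbL l hl; lia.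
  have h1 : forall l, l \in M0 -> ~~ (l <= - Posz i) by move=> l hl; have := hbM l hl; lia.
  have h2 : forall l, l \in Rr -> ~~ (l <= - Posz i) by move=> l hl; have := hbR l hl; lia.
  rewrite (bigNone _ _ h1) (bigNone _ _ h2) !mulr1.
  by rewrite -prodrXr; apply: eq_bigr => l _; rewrite exprM.
rewrite pref.
change (mono x n a) with (Pr x a (idxI n)).
rewrite hdec Pr_cat Pr_cat.
have cL : forall l, l \in L -> Omega q x n i * x l = q ^+ 2 *: (x l * Omega q x n i).
  move=> l hl; have := hbL l hl => hb.
  have -> : l = - Posz `|l|%N by lia.
  apply: L1 => //; lia.
have cM : forall l, l \in M0 -> Omega q x n i * x l = 1 *: (x l * Omega q x n i).
  move=> l hl; have := hbM l hl => hb.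
  rewrite scale1r; apply: L2 => //; [rewrite mem_idxI|]; lia.
rewrite (commL _ cL) (commL _ cM) expr1n scale1r; congr (_ *: _).
rewrite /Omega mulr_suml !mulr_sumr; apply: eq_big_nat => j /andP[hij hjn].
rewrite -scalerAl -!scalerAr exprD -scalerA; congr (_ *: _).
have [L1 [L2 [hL hb1 hb2]]] : exists L1 L2, [/\ L = L1 ++ [:: - Posz j] ++ L2,
    forall l, l \in L1 -> (- Posz n <= l) && (l < - Posz j) &
    forall l, l \in L2 -> (- Posz j < l) && (l <= - Posz i)].
  exists (rng (- Posz n) (n - j)), (rng (- Posz j + Posz 1) ((n - i).+1 - (n - j) - 1)).
  split; last first.
  - by move=> l; rewrite mem_rng; lia.
  - by move=> l; rewrite mem_rng; lia.
  rewrite /L (@rng_split (- Posz n) (n - i).+1 (n - j)); last by lia.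
  rewrite (@rng_split (- Posz n + Posz (n - j)) ((n - i).+1 - (n - j)) 1); last by lia.
  rewrite rng1; have -> : - Posz n + Posz (n - j) = - Posz j by lia.
  by [].
have [R1 [R2 [hR hb3 hb4]]] : exists R1 R2, [/\ Rr = R1 ++ [:: Posz j] ++ R2,
    forall l, l \in R1 -> (Posz i <= l) && (l < Posz j) &
    forall l, l \in R2 -> (Posz j < l) && (l <= Posz n)].
  exists (rng (1 + Posz i.-1) (j - i)), (rng (Posz j + Posz 1) (n - i.-1 - (j - i) - 1)).
  split; last first.
  - by move=> l; rewrite mem_rng; lia.
  - by move=> l; rewrite mem_rng; lia.
  rewrite /Rr (@rng_split (1 + Posz i.-1) (n - i.-1) (j - i)); last by lia.
  rewrite (@rng_split (1 + Posz i.-1 + Posz (j - i)) (n - i.-1 - (j - i)) 1); last by lia.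
  rewrite rng1; have -> : 1 + Posz i.-1 + Posz (j - i) = Posz j by lia.
  by [].
have hm : mono x n (addeps a (Posz j)) = Pr x (addeps a (Posz j)) (idxI n) by [].
rewrite hm hdec hL hR -!catA (@stepB _ _ q x n a j L1 L2 M0 R1 R2); first last.
- move=> l; rewrite !mem_cat; case/orP=> [h|/orP[h|/orP[h|/orP[h|h]]]];
    [have := hb1 l h|have := hb2 l h|have := hbM l h|have := hb3 l h|have := hb4 l h]; lia.
- by move=> l h; have := hb3 l h; rewrite mem_idxI; lia.
- move=> l; rewrite mem_cat => /orP[h|h]; [have := hb2 l h|have := hbM l h]; rewrite mem_idxI; lia.
- lia.
- exact: hr.
congr (_ ^+ _ *: _).
pose P := fun l : int => (1 - Posz j <= l) && (l <= Posz j - 1).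
have N1 : forall l, l \in L1 -> ~~ P l by move=> l h; have := hb1 l h; rewrite /P; lia.
have N2 : forall l, l \in [:: - Posz j] -> ~~ P l by move=> l; rewrite mem_seq1 /P => /eqP ->; lia.
have N3 : forall l, l \in [:: Posz j] -> ~~ P l by move=> l; rewrite mem_seq1 /P => /eqP ->; lia.
have N4 : forall l, l \in R2 -> ~~ P l by move=> l h; have := hb4 l h; rewrite /P; lia.
have Y1 : forall l, l \in L2 -> P l by move=> l h; have := hb2 l h; rewrite /P; lia.
have Y2 : forall l, l \in M0 -> P l by move=> l h; have := hbM l h; rewrite /P; lia.
have Y3 : forall l, l \in R1 -> P l by move=> l h; have := hb3 l h; rewrite /P; lia.
rewrite !big_cat /= (bigNone addn _ N1) (bigNone addn _ N2) (bigNone addn _ N3) (bigNone addn _ N4).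
rewrite (bigAll addn _ Y1) (bigAll addn _ Y2) (bigAll addn _ Y3).
by rewrite !add0n !addn0.
Qed.
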